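(* Let $a<b$, $\ell_3>0$, $R>0$ and $\epsilon=1/R$. Let $U(y,z)$ be a smooth real-valued function on $[a,b]\times\mathbb{R}$, $\ell_3$-periodic in $z$, and let $g=\max\{\|U_y\|_{L^\infty},\|U_z\|_{L^\infty}\}$. Let $k>0$ and $c=c_r+ic_i\in\mathbb{C}$, and suppose there are smooth functions $u,v,w,p$ on $[a,b]\times\mathbb{R}$, $\ell_3$-periodic in $z$, with $(u,v,w)$ not identically zero, such that \[ ik(U-c)u+vU_y+wU_z=-ikp+\epsilon(\Delta-k^2)u,\quad ik(U-c)v=-p_y+\epsilon(\Delta-k^2)v, \] \[ ik(U-c)w=-p_z+\epsilon(\Delta-k^2)w,\quad iku+v_y+w_z=0, \] with $u=v=w=0$ at $y=a$ and $y=b$. If $Rg<\min(k,k^3)$, then $c_i<0$ (the eigenvalue is stable).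
   Context: Here $\Delta=\partial_y^2+\partial_z^2$. The system is the linearized Navier–Stokes operator (Reynolds number $R$, no-slip walls at $y=a,b$, periodic in $x$ and $z$) about the shear $(U(y,z),0,0)$, for perturbations of the form $e^{ik(x-ct)}(u,v,w,p)(y,z)+\text{c.c.}$; $(k,c)$ is then called an eigenmode. *)

(* Defs.v *)
From Stdlib Require Import Reals List.
From Coquelicot Require Import Coquelicot.
Open Scope R_scope.

Definition pdy (f : R -> R -> R) : R -> R -> R :=
  fun y z => Derive (fun t => f t z) y.
Definition pdz (f : R -> R -> R) : R -> R -> R :=
  fun y z => Derive (fun t => f y t) z.

Fixpoint iterd (l : list bool) (f : R -> R -> R) : R -> R -> R :=
  match l with
  | nil => f
  | b :: l' => (if b then pdy else pdz) (iterd l' f)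
  end.

Definition smooth2 (f : R -> R -> R) : Prop :=
  forall (l : list bool) (y z : R),
    ex_derive (fun t => iterd l f t z) y /\
    ex_derive (fun t => iterd l f y t) z /\
    continuous (fun q : R * R => iterd l f (fst q) (snd q)) (y, z).

Definition csmooth2 (f : R -> R -> C) : Prop :=
  smooth2 (fun y z => Re (f y z)) /\ smooth2 (fun y z => Im (f y z)).

Definition cpdy (f : R -> R -> C) : R -> R -> C :=
  fun y z => (pdy (fun y z => Re (f y z)) y z, pdy (fun y z => Im (f y z)) y z).
Definition cpdz (f : R -> R -> C) : R -> R -> C :=
  fun y z => (pdz (fun y z => Re (f y z)) y z, pdz (fun y z => Im (f y z)) y z).

Definition clap (f : R -> R -> C) : R -> R -> C :=
  fun y z => Cplus (cpdy (cpdy f) y z) (cpdz (cpdz f) y z).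

Definition zperiodic {T} (a b l : R) (f : R -> R -> T) : Prop :=
  forall y z, a <= y <= b -> f y (z + l) = f y z.

Definition gradsup (a b : R) (U : R -> R -> R) : Rbar :=
  Lub_Rbar (fun r => exists y z, a <= y <= b /\
              (r = Rabs (pdy U y z) \/ r = Rabs (pdz U y z))).

(* Main.v *)
Require Import Defs.
From Stdlib Require Import Reals List Lra.
From Coquelicot Require Import Coquelicot.
Open Scope R_scope.

Lemma c2d_cont1 (F : R -> R -> R) y z :
  continuity_2d_pt F y z -> continuous (fun t => F y t) z.
Proof.
  intros H. apply continuity_2d_pt_filterlim in H.
  apply (continuous_comp_2 (fun _ : R => y) (fun t => t) F).
  - apply continuous_const.
  - apply continuous_id.
  - exact H.
Qed.

Lemma sm_cont f l y z : smooth2 f -> continuity_2d_pt (iterd l f) y z.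
Proof.
  intros H. apply continuity_2d_pt_filterlim. exact (proj2 (proj2 (H l y z))).
Qed.

Lemma sm_exy f l y z : smooth2 f -> ex_derive (fun t => iterd l f t z) y.
Proof. intros H. exact (proj1 (H l y z)). Qed.

Lemma sm_exz f l y z : smooth2 f -> ex_derive (fun t => iterd l f y t) z.
Proof. intros H. exact (proj1 (proj2 (H l y z))). Qed.

Lemma param_deriv (F DF : R -> R -> R) z0 z1 y :
  (forall y z, is_derive (fun t => F t z) y (DF y z)) ->
  (forall y z, continuity_2d_pt F y z) ->
  (forall y z, continuity_2d_pt DF y z) ->
  is_derive (fun y => RInt (fun t => F y t) z0 z1) y (RInt (fun t => DF y t) z0 z1).
Proof.
  intros Hd Hc Hdc.
  assert (E : forall y z, Derive (fun t => F t z) y = DF y z).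
  { intros; apply is_derive_unique; apply Hd. }
  assert (E2 : RInt (fun t => DF y t) z0 z1 = RInt (fun t => Derive (fun u => F u t) y) z0 z1).
  { apply RInt_ext. intros; rewrite E; reflexivity. }
  rewrite E2.
  apply is_derive_RInt_param.
  - apply filter_forall. intros x t _. eexists. apply Hd.
  - intros t _. apply continuity_2d_pt_ext with (f := DF).
    + intros; rewrite E; reflexivity.
    + apply Hdc.
  - apply filter_forall. intros x. apply (@ex_RInt_continuous R_CompleteNormedModule). intros t _. apply c2d_cont1, Hc.
Qed.

Lemma ftc_z (F DF : R -> R -> R) z0 z1 y :
  (forall z, is_derive (fun t => F y t) z (DF y z)) ->
  (forall z, continuity_2d_pt DF y z) ->
  RInt (fun t => DF y t) z0 z1 = F y z1 - F y z0.
Proof.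
  intros Hd Hc. apply is_RInt_unique.
  apply (is_RInt_derive (fun t => F y t) (fun t => DF y t)).
  - intros; apply Hd.
  - intros; apply c2d_cont1, Hc.
Qed.

Lemma exR (F : R -> R -> R) y z0 z1 :
  (forall z, continuity_2d_pt F y z) -> ex_RInt (fun t => F y t) z0 z1.
Proof. intros H. apply (@ex_RInt_continuous R_CompleteNormedModule). intros; apply c2d_cont1, H. Qed.

Definition R1 (f : R -> R -> C) : R -> R -> R := fun y z => Re (f y z).
Definition I1 (f : R -> R -> C) : R -> R -> R := fun y z => Im (f y z).

Definition Sy (eps : R) (u v w p : R -> R -> C) (y z : R) : R :=
  - (R1 p y z * R1 v y z + I1 p y z * I1 v y z)
  + eps * (R1 u y z * pdy (R1 u) y z + I1 u y z * pdy (I1 u) y z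
         + R1 v y z * pdy (R1 v) y z + I1 v y z * pdy (I1 v) y z
         + R1 w y z * pdy (R1 w) y z + I1 w y z * pdy (I1 w) y z).

Definition Dy (eps : R) (u v w p : R -> R -> C) (y z : R) : R :=
  - (pdy (R1 p) y z * R1 v y z + R1 p y z * pdy (R1 v) y z
     + pdy (I1 p) y z * I1 v y z + I1 p y z * pdy (I1 v) y z)
  + eps * (pdy (R1 u) y z * pdy (R1 u) y z + R1 u y z * pdy (pdy (R1 u)) y z
         + pdy (I1 u) y z * pdy (I1 u) y z + I1 u y z * pdy (pdy (I1 u)) y z
         + pdy (R1 v) y z * pdy (R1 v) y z + R1 v y z * pdy (pdy (R1 v)) y z
         + pdy (I1 v) y z * pdy (I1 v) y z + I1 v y z * pdy (pdy (I1 v)) y z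
         + pdy (R1 w) y z * pdy (R1 w) y z + R1 w y z * pdy (pdy (R1 w)) y z
         + pdy (I1 w) y z * pdy (I1 w) y z + I1 w y z * pdy (pdy (I1 w)) y z).

Lemma Sy_deriv eps u v w p y z :
  csmooth2 u -> csmooth2 v -> csmooth2 w -> csmooth2 p ->
  is_derive (fun t => Sy eps u v w p t z) y (Dy eps u v w p y z).
Proof.
  intros [Hu1 Hu2] [Hv1 Hv2] [Hw1 Hw2] [Hp1 Hp2].
  unfold Sy, Dy.
  auto_derive.
  - repeat split; first [ apply (sm_exy _ nil); assumption | apply (sm_exy _ (true :: nil)); assumption ].
  - unfold pdy. ring.
Qed.

Definition Sz (eps : R) (u v w p : R -> R -> C) (y z : R) : R :=
  - (R1 p y z * R1 w y z + I1 p y z * I1 w y z)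
  + eps * (R1 u y z * pdz (R1 u) y z + I1 u y z * pdz (I1 u) y z
         + R1 v y z * pdz (R1 v) y z + I1 v y z * pdz (I1 v) y z
         + R1 w y z * pdz (R1 w) y z + I1 w y z * pdz (I1 w) y z).

Definition Dz (eps : R) (u v w p : R -> R -> C) (y z : R) : R :=
  - (pdz (R1 p) y z * R1 w y z + R1 p y z * pdz (R1 w) y z
     + pdz (I1 p) y z * I1 w y z + I1 p y z * pdz (I1 w) y z)
  + eps * (pdz (R1 u) y z * pdz (R1 u) y z + R1 u y z * pdz (pdz (R1 u)) y z
         + pdz (I1 u) y z * pdz (I1 u) y z + I1 u y z * pdz (pdz (I1 u)) y z
         + pdz (R1 v) y z * pdz (R1 v) y z + R1 v y z * pdz (pdz (R1 v)) y z
         + pdz (I1 v) y z * pdz (I1 v) y z + I1 v y z * pdz (pdz (I1 v)) y z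
         + pdz (R1 w) y z * pdz (R1 w) y z + R1 w y z * pdz (pdz (R1 w)) y z
         + pdz (I1 w) y z * pdz (I1 w) y z + I1 w y z * pdz (pdz (I1 w)) y z).

Lemma Sz_deriv eps u v w p y z :
  csmooth2 u -> csmooth2 v -> csmooth2 w -> csmooth2 p ->
  is_derive (fun t => Sz eps u v w p y t) z (Dz eps u v w p y z).
Proof.
  intros [Hu1 Hu2] [Hv1 Hv2] [Hw1 Hw2] [Hp1 Hp2].
  unfold Sz, Dz.
  auto_derive.
  - repeat split; first [ apply (sm_exz _ nil); assumption | apply (sm_exz _ (false :: nil)); assumption ].
  - unfold pdz. ring.
Qed.

Definition En (u v w : R -> R -> C) (y z : R) : R :=
  R1 u y z * R1 u y z + I1 u y z * I1 u y z + R1 v y z * R1 v y z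
  + I1 v y z * I1 v y z + R1 w y z * R1 w y z + I1 w y z * I1 w y z.

Definition Dsq (u v w : R -> R -> C) (y z : R) : R :=
  pdy (R1 u) y z * pdy (R1 u) y z + pdy (I1 u) y z * pdy (I1 u) y z
  + pdy (R1 v) y z * pdy (R1 v) y z + pdy (I1 v) y z * pdy (I1 v) y z
  + pdy (R1 w) y z * pdy (R1 w) y z + pdy (I1 w) y z * pdy (I1 w) y z
  + pdz (R1 u) y z * pdz (R1 u) y z + pdz (I1 u) y z * pdz (I1 u) y z
  + pdz (R1 v) y z * pdz (R1 v) y z + pdz (I1 v) y z * pdz (I1 v) y z
  + pdz (R1 w) y z * pdz (R1 w) y z + pdz (I1 w) y z * pdz (I1 w) y z.

Definition Bt (U : R -> R -> R) (u v w : R -> R -> C) (y z : R) : R :=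
  pdy U y z * (R1 u y z * R1 v y z + I1 u y z * I1 v y z)
  + pdz U y z * (R1 u y z * R1 w y z + I1 u y z * I1 w y z).

Ltac base :=
  match goal with
  | |- continuity_2d_pt (fun _ _ => pdy (pdy ?f) _ _) _ _ => apply (sm_cont f (true :: true :: nil)); assumption
  | |- continuity_2d_pt (fun _ _ => pdz (pdz ?f) _ _) _ _ => apply (sm_cont f (false :: false :: nil)); assumption
  | |- continuity_2d_pt (fun _ _ => pdy ?f _ _) _ _ => apply (sm_cont f (true :: nil)); assumption
  | |- continuity_2d_pt (fun _ _ => pdz ?f _ _) _ _ => apply (sm_cont f (false :: nil)); assumption
  | |- continuity_2d_pt (fun _ _ => ?f _ _) _ _ => apply (sm_cont f nil); assumption
  | |- continuity_2d_pt (pdy (pdy ?f)) _ _ => apply (sm_cont f (true :: true :: nil)); assumption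
  | |- continuity_2d_pt (pdz (pdz ?f)) _ _ => apply (sm_cont f (false :: false :: nil)); assumption
  | |- continuity_2d_pt (pdy ?f) _ _ => apply (sm_cont f (true :: nil)); assumption
  | |- continuity_2d_pt (pdz ?f) _ _ => apply (sm_cont f (false :: nil)); assumption
  | |- continuity_2d_pt ?f _ _ => apply (sm_cont f nil); assumption
  end.

Ltac cont :=
  repeat match goal with
  | |- continuity_2d_pt (fun _ _ => _ + _) _ _ => apply continuity_2d_pt_plus
  | |- continuity_2d_pt (fun _ _ => _ * _) _ _ => apply continuity_2d_pt_mult
  | |- continuity_2d_pt (fun _ _ => - _) _ _ => apply continuity_2d_pt_opp
  | |- continuity_2d_pt (fun _ _ => ?c) _ _ => apply continuity_2d_pt_const
  | |- continuity_2d_pt _ _ _ => base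
  end.

Lemma cont_all eps u v w p y z :
  csmooth2 u -> csmooth2 v -> csmooth2 w -> csmooth2 p ->
  continuity_2d_pt (Sy eps u v w p) y z /\
  continuity_2d_pt (Dy eps u v w p) y z /\
  continuity_2d_pt (Dz eps u v w p) y z /\
  continuity_2d_pt (En u v w) y z.
Proof.
  intros [Hu1 Hu2] [Hv1 Hv2] [Hw1 Hw2] [Hp1 Hp2].
  unfold Sy, Dy, Dz, En.
  split; [|split; [|split]]; cont.
Qed.

Lemma ReCplus a b : Re (Cplus a b) = Re a + Re b. Proof. reflexivity. Qed.
Lemma ImCplus a b : Im (Cplus a b) = Im a + Im b. Proof. reflexivity. Qed.
Lemma ReCmult a b : Re (Cmult a b) = Re a * Re b - Im a * Im b. Proof. reflexivity. Qed.
Lemma ImCmult a b : Im (Cmult a b) = Re a * Im b + Im a * Re b. Proof. reflexivity. Qed.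
Lemma ReCopp a : Re (Copp a) = - Re a. Proof. reflexivity. Qed.
Lemma ImCopp a : Im (Copp a) = - Im a. Proof. reflexivity. Qed.
Lemma ReCminus a b : Re (Cminus a b) = Re a - Re b. Proof. reflexivity. Qed.
Lemma ImCminus a b : Im (Cminus a b) = Im a - Im b. Proof. reflexivity. Qed.
Lemma ReRtoC x : Re (RtoC x) = x. Proof. reflexivity. Qed.
Lemma ImRtoC x : Im (RtoC x) = 0. Proof. reflexivity. Qed.
Lemma ReCi : Re Ci = 0. Proof. reflexivity. Qed.
Lemma ImCi : Im Ci = 1. Proof. reflexivity. Qed.
Lemma Reclap f y z : Re (clap f y z) = pdy (pdy (R1 f)) y z + pdz (pdz (R1 f)) y z. Proof. reflexivity. Qed.
Lemma Imclap f y z : Im (clap f y z) = pdy (pdy (I1 f)) y z + pdz (pdz (I1 f)) y z. Proof. reflexivity. Qed.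
Lemma Recpdy f y z : Re (cpdy f y z) = pdy (R1 f) y z. Proof. reflexivity. Qed.
Lemma Imcpdy f y z : Im (cpdy f y z) = pdy (I1 f) y z. Proof. reflexivity. Qed.
Lemma Recpdz f y z : Re (cpdz f y z) = pdz (R1 f) y z. Proof. reflexivity. Qed.
Lemma Imcpdz f y z : Im (cpdz f y z) = pdz (I1 f) y z. Proof. reflexivity. Qed.
Lemma ReR1 (f : R -> R -> C) y z : Re (f y z) = R1 f y z. Proof. reflexivity. Qed.
Lemma ImI1 (f : R -> R -> C) y z : Im (f y z) = I1 f y z. Proof. reflexivity. Qed.

Ltac cnorm H :=
  repeat progress rewrite ?ReCplus, ?ImCplus, ?ReCmult, ?ImCmult, ?ReCopp, ?ImCopp, ?ReCminus, ?ImCminus,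
    ?ReRtoC, ?ImRtoC, ?ReCi, ?ImCi, ?Reclap, ?Imclap, ?Recpdy, ?Imcpdy, ?Recpdz, ?Imcpdz,
    ?ReR1, ?ImI1 in H.

Lemma pointwise (eps k : R) (c : C) (U : R -> R -> R) (u v w p : R -> R -> C) y z :
  Cplus (Cplus (Cmult (Cmult (Cmult Ci (RtoC k)) (Cminus (RtoC (U y z)) c)) (u y z))
               (Cmult (v y z) (RtoC (pdy U y z))))
        (Cmult (w y z) (RtoC (pdz U y z)))
  = Cplus (Copp (Cmult (Cmult Ci (RtoC k)) (p y z)))
          (Cmult (RtoC eps) (Cminus (clap u y z) (Cmult (RtoC (k ^ 2)) (u y z)))) ->
  Cmult (Cmult (Cmult Ci (RtoC k)) (Cminus (RtoC (U y z)) c)) (v y z)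
  = Cplus (Copp (cpdy p y z))
          (Cmult (RtoC eps) (Cminus (clap v y z) (Cmult (RtoC (k ^ 2)) (v y z)))) ->
  Cmult (Cmult (Cmult Ci (RtoC k)) (Cminus (RtoC (U y z)) c)) (w y z)
  = Cplus (Copp (cpdz p y z))
          (Cmult (RtoC eps) (Cminus (clap w y z) (Cmult (RtoC (k ^ 2)) (w y z)))) ->
  Cplus (Cplus (Cmult (Cmult Ci (RtoC k)) (u y z)) (cpdy v y z)) (cpdz w y z) = RtoC 0 ->
  Dy eps u v w p y z + Dz eps u v w p y z
  = k * Im c * En u v w y z + Bt U u v w y z + eps * Dsq u v w y z + eps * k ^ 2 * En u v w y z.
Proof.
  intros E1 E2 E3 E4.
  pose proof (f_equal Re E1) as E1r. pose proof (f_equal Im E1) as E1i.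
  pose proof (f_equal Re E2) as E2r. pose proof (f_equal Im E2) as E2i.
  pose proof (f_equal Re E3) as E3r. pose proof (f_equal Im E3) as E3i.
  pose proof (f_equal Re E4) as E4r. pose proof (f_equal Im E4) as E4i.
  clear E1 E2 E3 E4.
  cnorm E1r. cnorm E1i. cnorm E2r. cnorm E2i. cnorm E3r. cnorm E3i. cnorm E4r. cnorm E4i.
  apply (f_equal (fun t => R1 u y z * t)) in E1r.
  apply (f_equal (fun t => I1 u y z * t)) in E1i.
  apply (f_equal (fun t => R1 v y z * t)) in E2r.
  apply (f_equal (fun t => I1 v y z * t)) in E2i.
  apply (f_equal (fun t => R1 w y z * t)) in E3r.
  apply (f_equal (fun t => I1 w y z * t)) in E3i.
  apply (f_equal (fun t => R1 p y z * t)) in E4r.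
  apply (f_equal (fun t => I1 p y z * t)) in E4i.
  unfold Dy, Dz, En, Bt, Dsq.
  lra.
Qed.

Lemma RInt_pos_pt (f : R -> R) a b : a < b ->
  (forall t, a <= t <= b -> continuous f t) ->
  (forall t, a <= t <= b -> 0 <= f t) -> 0 < f a -> 0 < RInt f a b.
Proof.
  intros Hab Hc Hp Ha.
  assert (Hh : 0 < f a / 2) by lra.
  destruct (Hc a (conj (Rle_refl a) (Rlt_le _ _ Hab)) (ball (f a) (mkposreal _ Hh)) (locally_ball _ _)) as [d Hd].
  set (m := Rmin (a + d / 2) b).
  assert (Hd0 := cond_pos d).
  assert (Hm1 : a < m) by (unfold m, Rmin; destruct Rle_dec; lra).
  assert (Hm2 : m <= b) by (unfold m, Rmin; destruct Rle_dec; lra).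
  assert (Hm3 : m <= a + d / 2) by (unfold m, Rmin; destruct Rle_dec; lra).
  assert (Hex : forall x y, a <= x -> x <= y -> y <= b -> ex_RInt f x y).
  { intros x y H1 H2 H3. apply (@ex_RInt_continuous R_CompleteNormedModule).
    intros t Ht. apply Hc. rewrite Rmin_left in Ht by lra. rewrite Rmax_right in Ht by lra. lra. }
  rewrite <- (RInt_Chasles f a m b) by (apply Hex; lra).
  change (0 < RInt f a m + RInt f m b).
  assert (0 < RInt f a m).
  { apply RInt_gt_0; auto.
    - intros x Hx. assert (Hb : ball a d x).
      { change (Rabs (x - a) < d). rewrite Rabs_right; lra. }
      specialize (Hd x Hb). change (Rabs (f x - f a) < f a / 2) in Hd.
      apply Rabs_def2 in Hd. lra.
    - intros; apply Hc; lra. }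
  assert (0 <= RInt f m b).
  { apply RInt_ge_0; auto. apply Hex; lra. intros; apply Hp; lra. }
  lra.
Qed.

Lemma nondecr (Q DQ : R -> R) a b :
  (forall y, is_derive Q y (DQ y)) -> (forall y, a <= y <= b -> 0 <= DQ y) ->
  forall x y, a <= x -> x <= y -> y <= b -> Q x <= Q y.
Proof.
  intros HQ HD x y H1 H2 H3.
  destruct (Req_dec x y) as [->|Hne]; [lra|].
  destruct (Rle_or_lt (Q x) (Q y)) as [|Hlt]; [assumption|exfalso].
  set (eta := (Q x - Q y) / (y - x)).
  assert (He : 0 < eta) by (unfold eta; apply Rdiv_lt_0_compat; lra).
  assert (Hinc := incr_function_le (fun t => Q t + eta * t) (Finite a) (Finite b) (fun t => DQ t + eta)).
  assert (Q x + eta * x < Q y + eta * y).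
  { apply Hinc; simpl; try lra.
    - intros t _ _.
      assert (Hd : is_derive (fun t => eta * t) t eta) by (auto_derive; [exact I | ring]).
      exact (is_derive_plus Q (fun t => eta * t) t (DQ t) eta (HQ t) Hd).
    - intros t Ht1 Ht2. specialize (HD t (conj Ht1 Ht2)). lra. }
  assert (eta * (y - x) = Q x - Q y) by (unfold eta; field; lra).
  lra.
Qed.

Lemma grad_fin a b U Rey K : a <= b -> 0 < Rey ->
  Rbar_lt (Rbar_mult (Finite Rey) (gradsup a b U)) (Finite K) ->
  exists g, 0 <= g /\ Rey * g < K /\
    forall y z, a <= y <= b -> Rabs (pdy U y z) <= g /\ Rabs (pdz U y z) <= g.
Proof.
  intros Hab HR Hg. unfold gradsup in Hg.
  set (S := fun r => exists y z, a <= y <= b /\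
              (r = Rabs (pdy U y z) \/ r = Rabs (pdz U y z))) in Hg.
  destruct (Lub_Rbar_correct S) as [Hub _].
  assert (HS : S (Rabs (pdy U a 0))) by (exists a, 0; split; [lra | left; reflexivity]).
  destruct (Lub_Rbar S) as [g| |] eqn:E.
  - exists g. simpl in Hg. pose proof (Hub _ HS) as Hub0. simpl in Hub0.
    split; [pose proof (Rabs_pos (pdy U a 0)); lra|]. split; [exact Hg|].
    intros y z Hy. split.
    + assert (H : S (Rabs (pdy U y z))) by (exists y, z; split; [exact Hy | left; reflexivity]).
      exact (Hub _ H).
    + assert (H : S (Rabs (pdz U y z))) by (exists y, z; split; [exact Hy | right; reflexivity]).
      exact (Hub _ H).
  - exfalso. simpl in Hg. destruct (Rle_dec 0 Rey) as [h|h]; [|lra].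
    destruct (Rle_lt_or_eq_dec 0 Rey h); [simpl in Hg; exact Hg | lra].
  - exfalso. specialize (Hub _ HS). exact Hub.
Qed.

Lemma sq_nonneg_sum6 a1 a2 a3 a4 a5 a6 : 0 <= a1*a1 + a2*a2 + a3*a3 + a4*a4 + a5*a5 + a6*a6.
Proof. nra. Qed.

Lemma En_nonneg u v w y z : 0 <= En u v w y z.
Proof. unfold En. apply sq_nonneg_sum6. Qed.

Lemma Dsq_nonneg u v w y z : 0 <= Dsq u v w y z.
Proof. unfold Dsq. pose proof (sq_nonneg_sum6 (pdy (R1 u) y z) (pdy (I1 u) y z) (pdy (R1 v) y z) (pdy (I1 v) y z) (pdy (R1 w) y z) (pdy (I1 w) y z)).
  pose proof (sq_nonneg_sum6 (pdz (R1 u) y z) (pdz (I1 u) y z) (pdz (R1 v) y z) (pdz (I1 v) y z) (pdz (R1 w) y z) (pdz (I1 w) y z)). lra. Qed.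



Lemma prod_bound (G X g e : R) : Rabs G <= g -> Rabs X <= e -> - (g * e) <= G * X.
Proof.
  intros H1 H2.
  assert (Rabs (G * X) <= g * e).
  { rewrite Rabs_mult. apply Rmult_le_compat; auto; apply Rabs_pos. }
  unfold Rabs in H; destruct (Rcase_abs (G * X)); lra.
Qed.

Lemma pair_bound a1 b1 a2 b2 : Rabs (a1 * b1 + a2 * b2) <= (a1*a1 + b1*b1 + a2*a2 + b2*b2) / 2.
Proof.
  pose proof (Rle_0_sqr (a1 - b1)); pose proof (Rle_0_sqr (a2 - b2));
  pose proof (Rle_0_sqr (a1 + b1)); pose proof (Rle_0_sqr (a2 + b2)); unfold Rsqr in *.
  unfold Rabs; destruct (Rcase_abs _); lra.
Qed.

Lemma Bt_bound U u v w y z g :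
  Rabs (pdy U y z) <= g -> Rabs (pdz U y z) <= g -> 0 <= g ->
  - (g * En u v w y z) <= Bt U u v w y z.
Proof.
  intros H1 H2 Hg. unfold Bt, En.
  pose proof (prod_bound _ _ _ _ H1 (pair_bound (R1 u y z) (R1 v y z) (I1 u y z) (I1 v y z))).
  pose proof (prod_bound _ _ _ _ H2 (pair_bound (R1 u y z) (R1 w y z) (I1 u y z) (I1 w y z))).
  nra.
Qed.

Lemma C0 (q : C) : Re q = 0 -> Im q = 0 -> q = RtoC 0.
Proof. destruct q as [q1 q2]. simpl. intros -> ->. reflexivity. Qed.

Lemma per_pdz (F : R -> R -> R) l y z :
  (forall t, F y (t + l) = F y t) -> (forall t, ex_derive (fun s => F y s) t) ->
  pdz F y (z + l) = pdz F y z.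
Proof.
  intros Hp Hd. unfold pdz.
  assert (Hc := Derive_comp (fun s => F y s) (fun t => t + l) z (Hd _)).
  assert (Hg : ex_derive (fun t => t + l) z) by (auto_derive; exact I).
  specialize (Hc Hg). cbv beta in Hc.
  assert (Hg1 : Derive (fun t => t + l) z = 1) by (apply is_derive_unique; auto_derive; [exact I | ring]).
  rewrite Hg1, Rmult_1_l in Hc. rewrite <- Hc.
  apply Derive_ext. intros; apply Hp.
Qed.

Lemma Sz_per eps a b l3 (u v w p : R -> R -> C) y z :
  csmooth2 u -> csmooth2 v -> csmooth2 w ->
  zperiodic a b l3 u -> zperiodic a b l3 v ->
  zperiodic a b l3 w -> zperiodic a b l3 p -> a <= y <= b ->
  Sz eps u v w p y (z + l3) = Sz eps u v w p y z.
Proof.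
  intros [Hu1 Hu2] [Hv1 Hv2] [Hw1 Hw2] Hup Hvp Hwp Hpp Hy.
  assert (PR : forall f : R -> R -> C, zperiodic a b l3 f -> forall t, R1 f y (t + l3) = R1 f y t)
    by (intros f Hf t; unfold R1; rewrite Hf; auto).
  assert (PI : forall f : R -> R -> C, zperiodic a b l3 f -> forall t, I1 f y (t + l3) = I1 f y t)
    by (intros f Hf t; unfold I1; rewrite Hf; auto).
  unfold Sz.
  rewrite (PR u Hup), (PR v Hvp), (PR w Hwp), (PR p Hpp), (PI u Hup), (PI v Hvp), (PI w Hwp), (PI p Hpp).
  rewrite (per_pdz (R1 u)), (per_pdz (I1 u)), (per_pdz (R1 v)), (per_pdz (I1 v)),
    (per_pdz (R1 w)), (per_pdz (I1 w)); try reflexivity;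
  first [ apply PR; assumption | apply PI; assumption | intros t; apply (sm_exz _ nil); assumption ].
Qed.

Theorem theorem4
  (a b l3 Rey : R) (U : R -> R -> R) (k : R) (c : C)
  (u v w p : R -> R -> C) :
  a < b -> 0 < l3 -> 0 < Rey ->
  smooth2 U -> zperiodic a b l3 U ->
  0 < k ->
  csmooth2 u -> csmooth2 v -> csmooth2 w -> csmooth2 p ->
  zperiodic a b l3 u -> zperiodic a b l3 v ->
  zperiodic a b l3 w -> zperiodic a b l3 p ->
  (exists y z, a <= y <= b /\ (u y z <> RtoC 0 \/ v y z <> RtoC 0 \/ w y z <> RtoC 0)) ->
  (forall y z, a <= y <= b ->
     let eps := / Rey in
     let ikUc := Cmult (Cmult Ci (RtoC k)) (Cminus (RtoC (U y z)) c) in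
     Cplus (Cplus (Cmult ikUc (u y z)) (Cmult (v y z) (RtoC (pdy U y z))))
           (Cmult (w y z) (RtoC (pdz U y z)))
     = Cplus (Copp (Cmult (Cmult Ci (RtoC k)) (p y z)))
             (Cmult (RtoC eps) (Cminus (clap u y z) (Cmult (RtoC (k ^ 2)) (u y z))))
     /\
     Cmult ikUc (v y z)
     = Cplus (Copp (cpdy p y z))
             (Cmult (RtoC eps) (Cminus (clap v y z) (Cmult (RtoC (k ^ 2)) (v y z))))
     /\
     Cmult ikUc (w y z)
     = Cplus (Copp (cpdz p y z))
             (Cmult (RtoC eps) (Cminus (clap w y z) (Cmult (RtoC (k ^ 2)) (w y z))))
     /\
     Cplus (Cplus (Cmult (Cmult Ci (RtoC k)) (u y z)) (cpdy v y z)) (cpdz w y z)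
     = RtoC 0) ->
  (forall z, u a z = RtoC 0 /\ v a z = RtoC 0 /\ w a z = RtoC 0) ->
  (forall z, u b z = RtoC 0 /\ v b z = RtoC 0 /\ w b z = RtoC 0) ->
  Rbar_lt (Rbar_mult (Finite Rey) (gradsup a b U)) (Finite (Rmin k (k ^ 3))) ->
  Im c < 0.
Proof.
  intros Hab Hl3 HRe HU HUp Hk Hu Hv Hw Hp Hup Hvp Hwp Hpp [y0 [z0 [Hy0 Hnz]]] Heq Ha Hb Hg.
  destruct (Rlt_or_le (Im c) 0) as [|Hci]; [assumption | exfalso].
  destruct (grad_fin a b U Rey _ (Rlt_le _ _ Hab) HRe Hg) as [g [Hg0 [Hgk Hgb]]].
  set (eps := / Rey).
  assert (Heps : 0 < eps) by (unfold eps; apply Rinv_0_lt_compat; lra).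
  assert (Hmin : Rmin k (k ^ 3) <= k ^ 2) by (unfold Rmin; destruct Rle_dec; nra).
  set (delta := eps * k ^ 2 - g).
  assert (Hdelta : 0 < delta).
  { unfold delta, eps. assert (Rey * g < k ^ 2) by lra.
    apply Rmult_lt_reg_l with Rey; auto. field_simplify; lra. }
  set (z1 := z0 + l3).
  assert (Hz : z0 <= z1) by (unfold z1; lra).
  set (Q := fun y => RInt (fun t => Sy eps u v w p y t) z0 z1).
  set (DQ := fun y => RInt (fun t => Dy eps u v w p y t) z0 z1).
  set (A := fun y => RInt (fun t => En u v w y t) z0 z1).
  assert (HQ : forall y, is_derive Q y (DQ y)).
  { intros y. apply param_deriv.
    - intros; apply Sy_deriv; auto.
    - intros; apply (cont_all eps u v w p); auto.
    - intros; apply (cont_all eps u v w p); auto. }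
  assert (HDz : forall y, a <= y <= b -> RInt (fun t => Dz eps u v w p y t) z0 z1 = 0).
  { intros y Hy. rewrite (ftc_z (Sz eps u v w p) (Dz eps u v w p)).
    - unfold z1. rewrite (Sz_per eps a b l3); auto. apply Rminus_diag_eq. reflexivity.
    - intros; apply Sz_deriv; auto.
    - intros; apply (cont_all eps u v w p); auto. }
  assert (HDQ : forall y, a <= y <= b -> delta * A y <= DQ y).
  { intros y Hy.
    assert (E1 : RInt (fun t => Dy eps u v w p y t + Dz eps u v w p y t) z0 z1
                 = DQ y + RInt (fun t => Dz eps u v w p y t) z0 z1).
    { apply (RInt_plus (V := R_CompleteNormedModule) (fun t => Dy eps u v w p y t) (fun t => Dz eps u v w p y t));
      apply exR; intros; apply (cont_all eps u v w p); auto. }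
    rewrite HDz in E1 by auto. rewrite Rplus_0_r in E1. rewrite <- E1.
    assert (E2 : RInt (fun t => delta * En u v w y t) z0 z1 = delta * A y).
    { apply (RInt_scal (V := R_CompleteNormedModule) (fun t => En u v w y t)).
      apply exR; intros; apply (cont_all eps u v w p); auto. }
    rewrite <- E2.
    apply RInt_le; auto.
    - apply (exR (fun y t => delta * En u v w y t)). intros. apply continuity_2d_pt_mult.
      apply continuity_2d_pt_const. apply (cont_all eps u v w p); auto.
    - apply (exR (fun y t => Dy eps u v w p y t + Dz eps u v w p y t)). intros. apply continuity_2d_pt_plus; apply (cont_all eps u v w p); auto.
    - intros t _.
      destruct (Heq y t Hy) as [E1' [E2' [E3' E4']]].
      rewrite (pointwise eps k c U u v w p y t E1' E2' E3' E4').
      destruct (Hgb y t Hy) as [Hb1 Hb2].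
      pose proof (Bt_bound U u v w y t g Hb1 Hb2 Hg0).
      pose proof (En_nonneg u v w y t). pose proof (Dsq_nonneg u v w y t).
      assert (0 <= k * Im c * En u v w y t) by (apply Rmult_le_pos; [nra | auto]).
      assert (0 <= eps * Dsq u v w y t) by nra.
      (unfold delta; lra). }
  assert (HA : forall y, 0 <= A y).
  { intros y. apply RInt_ge_0; auto. apply exR; intros; apply (cont_all eps u v w p); auto.
    intros; apply En_nonneg. }
  assert (HQa : Q a = 0).
  { unfold Q. rewrite (RInt_ext _ (fun _ => 0)).
    - rewrite RInt_const. apply Rmult_0_r.
    - intros t _. destruct (Ha t) as [Ua [Va Wa]]. unfold Sy, R1, I1.
      rewrite Ua, Va, Wa. simpl. ring. }
  assert (HQb : Q b = 0).
  { unfold Q. rewrite (RInt_ext _ (fun _ => 0)).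
    - rewrite RInt_const. apply Rmult_0_r.
    - intros t _. destruct (Hb t) as [Ub [Vb Wb]]. unfold Sy, R1, I1.
      rewrite Ub, Vb, Wb. simpl. ring. }
  assert (Hmono := nondecr Q DQ a b HQ).
  assert (Hmono' : forall x y, a <= x -> x <= y -> y <= b -> Q x <= Q y).
  { apply Hmono. intros y Hy. specialize (HDQ y Hy). specialize (HA y). nra. }
  assert (Hay0 : a < y0 < b).
  { destruct Hy0 as [H1 H2]. split.
    - destruct H1 as [H1|H1]; auto. subst y0. exfalso. destruct (Ha z0) as [E1 [E2 E3]].
      destruct Hnz as [H|[H|H]]; auto.
    - destruct H2 as [H2|H2]; auto. subst y0. exfalso. destruct (Hb z0) as [E1 [E2 E3]].
      destruct Hnz as [H|[H|H]]; auto. }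
  assert (HQ0 : forall y, a <= y <= b -> Q y = 0).
  { intros y Hy. assert (Q a <= Q y) by (apply Hmono'; lra).
    assert (Q y <= Q b) by (apply Hmono'; lra). lra. }
  assert (HDQ0 : DQ y0 = 0).
  { assert (Hd : is_derive Q y0 0).
    { apply (is_derive_ext_loc (fun _ => 0) Q).
      - assert (Hp0 : 0 < Rmin (y0 - a) (b - y0)) by (apply Rmin_pos; lra).
        exists (mkposreal _ Hp0). intros t Ht. change (Rabs (t - y0) < Rmin (y0 - a) (b - y0)) in Ht.
        apply Rabs_def2 in Ht. destruct Ht as [Ht1 Ht2].
        assert (Rmin (y0 - a) (b - y0) <= y0 - a) by apply Rmin_l.
        assert (Rmin (y0 - a) (b - y0) <= b - y0) by apply Rmin_r.
        symmetry. apply HQ0. lra.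
      - apply (is_derive_const (K := R_AbsRing) (V := R_NormedModule)). }
    apply is_derive_unique in Hd. rewrite <- Hd. symmetry. apply is_derive_unique. apply HQ. }
  assert (HA0 : 0 < A y0).
  { unfold A. apply RInt_pos_pt.
    - unfold z1; lra.
    - intros; apply c2d_cont1; apply (cont_all eps u v w p); auto.
    - intros; apply En_nonneg.
    - unfold En.
      destruct (Rle_or_lt (R1 u y0 z0 * R1 u y0 z0 + I1 u y0 z0 * I1 u y0 z0 + R1 v y0 z0 * R1 v y0 z0 +
         I1 v y0 z0 * I1 v y0 z0 + R1 w y0 z0 * R1 w y0 z0 + I1 w y0 z0 * I1 w y0 z0) 0) as [Hle|]; [exfalso|assumption].
      assert (R1 u y0 z0 = 0 /\ I1 u y0 z0 = 0 /\ R1 v y0 z0 = 0 /\ I1 v y0 z0 = 0 /\ R1 w y0 z0 = 0 /\ I1 w y0 z0 = 0)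
        as [h1 [h2 [h3 [h4 [h5 h6]]]]].
      { pose proof (Rle_0_sqr (R1 u y0 z0)); pose proof (Rle_0_sqr (I1 u y0 z0));
        pose proof (Rle_0_sqr (R1 v y0 z0)); pose proof (Rle_0_sqr (I1 v y0 z0));
        pose proof (Rle_0_sqr (R1 w y0 z0)); pose proof (Rle_0_sqr (I1 w y0 z0)); unfold Rsqr in *.
        repeat split; nra. }
      destruct Hnz as [H|[H|H]]; apply H; apply C0; assumption. }
  specialize (HDQ y0 (conj (Rlt_le _ _ (proj1 Hay0)) (Rlt_le _ _ (proj2 Hay0)))).
  rewrite HDQ0 in HDQ. nra.
Qed.
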